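(* Let $t^k_{\alpha\beta}=\operatorname{tr}(W_\alpha V_\beta Z^k)=V_\beta Z^kW_\alpha$ for $k\in\mathbb N$, $\alpha,\beta\in\{1,\dots,d\}$, regarded as regular functions on $\mathcal C^\times_{n,d,q}$. Then (1) $\{\operatorname{tr}Z^i,t^k_{\beta\alpha}\}=0$ for all $i\ge1$, $k\ge0$ and all $\alpha,\beta$; (2) for all $\alpha,\beta,\gamma,\epsilon$ and $k,l\ge1$, $$\begin{aligned}\{t^k_{\gamma\epsilon},t^l_{\alpha\beta}\}=&\tfrac12[o(\gamma,\beta)+o(\epsilon,\alpha)-o(\epsilon,\beta)-o(\gamma,\alpha)]t^k_{\gamma\epsilon}t^l_{\alpha\beta}+\tfrac12o(\gamma,\beta)t^{k+l}_{\alpha\epsilon}t^0_{\gamma\beta}+\tfrac12o(\epsilon,\alpha)t^0_{\alpha\epsilon}t^{k+l}_{\gamma\beta}\\&-\tfrac12o(\epsilon,\beta)t^l_{\alpha\epsilon}t^k_{\gamma\beta}-\tfrac12o(\gamma,\alpha)t^k_{\alpha\epsilon}t^l_{\gamma\beta}-\delta_{\gamma\beta}\big[t^{k+l}_{\alpha\epsilon}+\tfrac12t^{k+l}_{\alpha\epsilon}t^0_{\gamma\beta}+\tfrac12t^k_{\gamma\epsilon}t^l_{\alpha\beta}\big]\\&+\delta_{\alpha\epsilon}\big[t^{k+l}_{\gamma\beta}+\tfrac12t^0_{\alpha\epsilon}t^{k+l}_{\gamma\beta}+\tfrac12t^k_{\gamma\epsilon}t^l_{\alpha\beta}\big]\\&+\tfrac12\Big[\sum_{\tau=1}^kt^{k-\tau}_{\gamma\beta}t^{l+\tau}_{\alpha\epsilon}-\sum_{\tau=1}^{k-1}t^{k+l-\tau}_{\gamma\beta}t^\tau_{\alpha\epsilon}\Big]-\tfrac12\Big[\sum_{\sigma=1}^lt^{k+\sigma}_{\gamma\beta}t^{l-\sigma}_{\alpha\epsilon}-\sum_{\sigma=1}^{l-1}t^\sigma_{\gamma\beta}t^{k+l-\sigma}_{\alpha\epsilon}\Big],\end{aligned}$$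 and this formula remains valid when $k=0$ or $l=0$ (or both) provided the final four sums are omitted.
   Context: Fix integers $n\ge1$, $d\ge1$ and $q\in\mathbb C^\times$ not a root of unity. Greek indices range over $\{1,\dots,d\}$; set $o(\alpha,\beta)=0$ if $\alpha=\beta$, $o(\alpha,\beta)=1$ if $\alpha<\beta$, $o(\alpha,\beta)=-1$ if $\alpha>\beta$. Let $\mathcal M^\times_{n,d,q}$ be the affine variety of tuples $(X,Z,V_1,\dots,V_d,W_1,\dots,W_d)$ with $X,Z\in\mathrm{GL}_n(\mathbb C)$, $V_\alpha\in\mathrm{Mat}_{1\times n}(\mathbb C)$, $W_\alpha\in\mathrm{Mat}_{n\times 1}(\mathbb C)$, such that every $\mathrm{Id}_n+W_\alpha V_\alpha$ is invertible and $XZX^{-1}Z^{-1}(\mathrm{Id}_n+W_1V_1)^{-1}\cdots(\mathrm{Id}_n+W_dV_d)^{-1}=q\,\mathrm{Id}_n$. $\mathrm{GL}_n$ acts by $g\cdot(X,Z,V_\alpha,W_\alpha)=(gXg^{-1},gZg^{-1},V_\alpha g^{-1},gW_\alpha)$; the action is free and $\mathcal C^\times_{n,d,q}=\mathcal M^\times_{n,d,q}/\!/\mathrm{GL}_n$ is a smooth affine variety of dimension $2nd$ with $\mathbb C[\mathcal C^\times_{n,d,q}]=\mathbb C[\mathcal M^\times_{n,d,q}]^{\mathrm{GL}_n}$. Write $V_{\alpha,j}$, $W_{\alpha,k}$ for the entries. Let $\{-,-\}$ be the antisymmetric biderivation on functions of $(X,Z,V_\alpha,W_\alpha)$ (Van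 den Bergh's quasi-Poisson bracket) given by $\{X_{ij},X_{kl}\}=\tfrac12(\delta_{il}(X^2)_{kj}-\delta_{kj}(X^2)_{il})$, $\{Z_{ij},Z_{kl}\}=\tfrac12(\delta_{kj}(Z^2)_{il}-\delta_{il}(Z^2)_{kj})$, $\{X_{ij},Z_{kl}\}=\tfrac12((ZX)_{kj}\delta_{il}+\delta_{kj}(XZ)_{il}+Z_{kj}X_{il}-X_{kj}Z_{il})$, $\{U_{ij},W_{\alpha,k}\}=\tfrac12(\delta_{kj}(UW_\alpha)_i-U_{kj}W_{\alpha,i})$, $\{U_{ij},V_{\alpha,l}\}=\tfrac12((V_\alpha U)_j\delta_{il}-V_{\alpha,j}U_{il})$ for $U\in\{X,Z\}$, $\{V_{\alpha,j},V_{\beta,l}\}=\tfrac12 o(\beta,\alpha)(V_{\beta,j}V_{\alpha,l}+V_{\alpha,j}V_{\beta,l})$, $\{W_{\alpha,i},W_{\beta,k}\}=\tfrac12 o(\beta,\alpha)(W_{\beta,k}W_{\alpha,i}+W_{\alpha,k}W_{\beta,i})$, $\{V_{\alpha,j},W_{\beta,k}\}=\delta_{\alpha\beta}(\delta_{kj}+\tfrac12W_{\alpha,k}V_{\alpha,j}+\tfrac12\delta_{kj}V_\alpha W_\alpha)+\tfrac12 o(\alpha,\beta)(\delta_{kj}V_\alpha W_\beta+W_{\beta,k}V_{\alpha,j})$. Restricted to $\mathrm{GL}_n$-invariant functions this bracket induces a non-degenerate Poisson bracket on $\mathcal C^\times_{n,d,q}$ (quasi-Hamiltonian reduction); this is the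 Poisson bracket $\{-,-\}$ on $\mathcal C^\times_{n,d,q}$. *)

(* Defs.v *)
From HB Require Import structures.
From mathcomp Require Import all_boot all_order all_algebra.
Set Implicit Arguments. Unset Strict Implicit. Unset Printing Implicit Defensive.
Import Order.TTheory GRing.Theory Num.Theory.
Local Open Scope ring_scope.

(* A point (X, Z, V, W) of Mat_n x Mat_n x Mat_{1xn}^d x Mat_{nx1}^d is encoded as
   X Z : 'M_n, V : 'M_(d,n) (row alpha = V_alpha), W : 'M_(n,d) (column alpha = W_alpha).
   So V_{alpha,j} = V alpha j and W_{alpha,k} = W k alpha.  Greek indices are 'I_d
   (alpha in {1..d} corresponds to alpha-1), ordered by value. *)

(* Polynomial functions of (X, Z, V, W), given uniformly over all commutative rings
   (so that they can be evaluated on points with polynomial entries). *)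
Definition pfun (n d : nat) :=
  forall S : comNzRingType, 'M[S]_n -> 'M[S]_n -> 'M[S]_(d, n) -> 'M[S]_(n, d) -> S.

(* Coordinates: X_ij | Z_ij | V_{alpha,j} | W_{alpha,k} *)
Definition coord (n d : nat) : finType :=
  ((('I_n * 'I_n) + ('I_n * 'I_n)) + (('I_d * 'I_n) + ('I_d * 'I_n)))%type.

Section Deriv.
Variables (R : comNzRingType) (n d : nat).

Definition dX (c : coord n d) : 'M[{poly R}]_n :=
  match c with inl (inl (i, j)) => 'X *: delta_mx i j | _ => 0 end.
Definition dZ (c : coord n d) : 'M[{poly R}]_n :=
  match c with inl (inr (i, j)) => 'X *: delta_mx i j | _ => 0 end.
Definition dV (c : coord n d) : 'M[{poly R}]_(d, n) :=
  match c with inr (inl (a, j)) => 'X *: delta_mx a j | _ => 0 end.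
Definition dW (c : coord n d) : 'M[{poly R}]_(n, d) :=
  match c with inr (inr (a, k)) => 'X *: delta_mx k a | _ => 0 end.

(* partial derivative of F with respect to coordinate c, at the point (X,Z,V,W):
   the coefficient of s in F(p + s e_c) *)
Definition pderiv (F : pfun n d) (X Z : 'M[R]_n) (V : 'M[R]_(d, n)) (W : 'M[R]_(n, d))
  (c : coord n d) : R :=
  (F [the comNzRingType of {poly R}]
     (map_mx polyC X + dX c) (map_mx polyC Z + dZ c)
     (map_mx polyC V + dV c) (map_mx polyC W + dW c))`_1.
End Deriv.

Section Bracket.
Variables (R : fieldType) (n d : nat).
Implicit Types (i j k l : 'I_n) (a b : 'I_d).

Definition kd (T : eqType) (x y : T) : R := (x == y)%:R.

Definition ord_sign a b : R :=
  if a == b then 0 else if (val a < val b)%N then 1 else -1.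

Variables (X Z : 'M[R]_n) (V : 'M[R]_(d, n)) (W : 'M[R]_(n, d)).

(* {U_ij, W_{alpha,k}} for U in {X, Z} *)
Definition brUW (U : 'M[R]_n) i j a k : R :=
  2^-1 * (kd k j * (U *m W) i a - U k j * W i a).
(* {U_ij, V_{alpha,l}} for U in {X, Z} *)
Definition brUV (U : 'M[R]_n) i j a l : R :=
  2^-1 * ((V *m U) a j * kd i l - V a j * U i l).
Definition brXZ i j k l : R :=
  2^-1 * ((Z *m X) k j * kd i l + kd k j * (X *m Z) i l + Z k j * X i l - X k j * Z i l).
Definition brVW a j b k : R :=
  kd a b * (kd k j + 2^-1 * (W k a * V a j) + 2^-1 * (kd k j * (V *m W) a a))
  + 2^-1 * ord_sign a b * (kd k j * (V *m W) a b + W k b * V a j).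

(* Van den Bergh's quasi-Poisson bracket of two coordinate functions *)
Definition brc (c1 c2 : coord n d) : R :=
  match c1, c2 with
  | inl (inl (i, j)), inl (inl (k, l)) =>
      2^-1 * (kd i l * (X *m X) k j - kd k j * (X *m X) i l)
  | inl (inr (i, j)), inl (inr (k, l)) =>
      2^-1 * (kd k j * (Z *m Z) i l - kd i l * (Z *m Z) k j)
  | inl (inl (i, j)), inl (inr (k, l)) => brXZ i j k l
  | inl (inr (k, l)), inl (inl (i, j)) => - brXZ i j k l
  | inl (inl (i, j)), inr (inr (a, k)) => brUW X i j a k
  | inl (inr (i, j)), inr (inr (a, k)) => brUW Z i j a k
  | inr (inr (a, k)), inl (inl (i, j)) => - brUW X i j a k
  | inr (inr (a, k)), inl (inr (i, j)) => - brUW Z i j a k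
  | inl (inl (i, j)), inr (inl (a, l)) => brUV X i j a l
  | inl (inr (i, j)), inr (inl (a, l)) => brUV Z i j a l
  | inr (inl (a, l)), inl (inl (i, j)) => - brUV X i j a l
  | inr (inl (a, l)), inl (inr (i, j)) => - brUV Z i j a l
  | inr (inl (a, j)), inr (inl (b, l)) =>
      2^-1 * ord_sign b a * (V b j * V a l + V a j * V b l)
  | inr (inr (a, i)), inr (inr (b, k)) =>
      2^-1 * ord_sign b a * (W k b * W i a + W k a * W i b)
  | inr (inl (a, j)), inr (inr (b, k)) => brVW a j b k
  | inr (inr (b, k)), inr (inl (a, j)) => - brVW a j b k
  end.

Definition qbr (F G : pfun n d) : R :=
  \sum_(c : coord n d) \sum_(c' : coord n d)
     pderiv F X Z V W c * pderiv G X Z V W c' * brc c c'.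
End Bracket.

Definition inMx (R : numClosedFieldType) (n d : nat) (q : R)
  (X Z : 'M[R]_n) (V : 'M[R]_(d, n)) (W : 'M[R]_(n, d)) : Prop :=
  [/\ X \in unitmx, Z \in unitmx,
      (forall a : 'I_d, (1%:M + col a W *m row a V) \in unitmx) &
      X *m Z *m invmx X *m invmx Z
        *m (\prod_(a < d) invmx (1%:M + col a W *m row a V)) = q%:M].

Definition tfun (n d : nat) (k : nat) (a b : 'I_d) : pfun n d :=
  fun S X Z V W => (V *m Z ^+ k *m W) b a.

Definition trZ (n d : nat) (i : nat) : pfun n d :=
  fun S X Z V W => \tr (Z ^+ i).

(* Main.v *)
Require Import Defs.
From HB Require Import structures.
From mathcomp Require Import all_boot all_order all_algebra.
From mathcomp Require Import ring zify.
Import Order.TTheory GRing.Theory Num.Theory.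
Local Open Scope ring_scope.

Section Coef.
Variable (R : comNzRingType).
Definition c0 m p (M : 'M[{poly R}]_(m,p)) : 'M[R]_(m,p) := map_mx (fun x : {poly R} => x`_0) M.
Definition c1 m p (M : 'M[{poly R}]_(m,p)) : 'M[R]_(m,p) := map_mx (fun x : {poly R} => x`_1) M.
Arguments c0 {m p}. Arguments c1 {m p}.

Lemma c0_mul m p r (M : 'M[{poly R}]_(m,p)) (N : 'M_(p,r)) : c0 (M *m N) = c0 M *m c0 N.
Proof.
apply/matrixP => i j; rewrite !mxE coef_sum; apply: eq_bigr => k _.
by rewrite coefM big_ord1 !mxE.
Qed.

Lemma c1_mul m p r (M : 'M[{poly R}]_(m,p)) (N : 'M_(p,r)) :
  c1 (M *m N) = c0 M *m c1 N + c1 M *m c0 N.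
Proof.
apply/matrixP => i j; rewrite !mxE coef_sum -big_split; apply: eq_bigr => k _ /=.
by rewrite coefM !big_ord_recl big_ord0 !mxE addr0.
Qed.

Lemma c0D m p (M N : 'M[{poly R}]_(m,p)) : c0 (M + N) = c0 M + c0 N.
Proof. by apply/matrixP => i j; rewrite !mxE coefD. Qed.
Lemma c1D m p (M N : 'M[{poly R}]_(m,p)) : c1 (M + N) = c1 M + c1 N.
Proof. by apply/matrixP => i j; rewrite !mxE coefD. Qed.
Lemma c0C m p (A : 'M[R]_(m,p)) : c0 (map_mx polyC A) = A.
Proof. by apply/matrixP => i j; rewrite !mxE coefC. Qed.
Lemma c1C m p (A : 'M[R]_(m,p)) : c1 (map_mx polyC A) = 0.
Proof. by apply/matrixP => i j; rewrite !mxE coefC. Qed.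
Lemma c0X m p (a : 'I_m) (b : 'I_p) : c0 ('X *: (delta_mx a b : 'M[{poly R}]_(m,p))) = 0.
Proof. by apply/matrixP => i j; rewrite !mxE coefXM. Qed.
Lemma c1X m p (a : 'I_m) (b : 'I_p) : c1 ('X *: (delta_mx a b : 'M[{poly R}]_(m,p))) = delta_mx a b.
Proof. by apply/matrixP => i j; rewrite !mxE coefXM /= coefMn coefC. Qed.
Lemma c0_0 m p : c0 (0 : 'M[{poly R}]_(m,p)) = 0.
Proof. by apply/matrixP => i j; rewrite !mxE coef0. Qed.
Lemma c1_0 m p : c1 (0 : 'M[{poly R}]_(m,p)) = 0.
Proof. by apply/matrixP => i j; rewrite !mxE coef0. Qed.

Lemma c0_exp n (M : 'M[{poly R}]_n) k : c0 (M ^+ k) = c0 M ^+ k.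
Proof.
elim: k => [|k IH]; first by apply/matrixP => i j; rewrite !mxE coefMn coefC /=; case: (i == j).
by rewrite !exprS -!mulmxE c0_mul IH.
Qed.

Lemma c1_exp n (M : 'M[{poly R}]_n) k :
  c1 (M ^+ k) = \sum_(m < k) c0 M ^+ m *m c1 M *m c0 M ^+ (k - m.+1).
Proof.
elim: k => [|k IH]; first by rewrite big_ord0; apply/matrixP => i j; rewrite !mxE coefMn coefC /=; case: (i == j).
rewrite exprS -mulmxE c1_mul IH c0_exp big_ord_recl /= expr0 mul1mx subn1 /= addrC.
congr (_ + _); rewrite mulmx_sumr; apply: eq_bigr => m _.
by rewrite exprS -!mulmxE !mulmxA subSS.
Qed.
End Coef.

Section Grad.
Variable R : fieldType.

Lemma tr_delta m p (i : 'I_m) (j : 'I_p) (Y : 'M[R]_(p,m)) :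
  \tr (delta_mx i j *m Y) = Y j i.
Proof.
rewrite /mxtrace (bigD1 i) //= big1 => [|k ki].
  rewrite mxE (bigD1 j) //= big1 => [|l lj]; first by rewrite !mxE !eqxx mul1r !addr0.
  by rewrite mxE (negbTE lj) andbF mul0r.
rewrite mxE big1 // => l _; by rewrite mxE (negbTE ki) mul0r.
Qed.

Lemma tr_delta3 m p r (i : 'I_m) (j : 'I_p) (A : 'M[R]_(r,m)) (B : 'M[R]_(p,r)) :
  \tr (A *m delta_mx i j *m B) = (B *m A) j i.
Proof. by rewrite -mulmxA mxtrace_mulC -mulmxA tr_delta. Qed.

Lemma entry_tr d (M : 'M[R]_d) (a b : 'I_d) : M b a = \tr (delta_mx a b *m M).
Proof. by rewrite tr_delta. Qed.

Definition gr n d (A : 'M[R]_n) (P : 'M[R]_(n,d)) (Q : 'M[R]_(d,n)) (c : Defs.coord n d) : R :=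
  match c with
  | inl (inl _) => 0
  | inl (inr (i, j)) => A j i
  | inr (inl (a, j)) => P j a
  | inr (inr (a, k)) => Q a k
  end.

Definition gZ n (Z N : 'M[R]_n) k := \sum_(m < k) Z ^+ (k - m.+1) *m N *m Z ^+ m.
Arguments gr {n d}. Arguments gZ {n}.

Lemma pderiv_tfun n d k (a b : 'I_d) X Z V W c :
  pderiv (@tfun n d k a b) X Z V W c =
  gr (gZ Z (W *m delta_mx a b *m V) k) (Z ^+ k *m W *m delta_mx a b)
     (delta_mx a b *m V *m Z ^+ k) c.
Proof.
rewrite /pderiv /tfun.
have -> : forall (M : 'M[{poly R}]_(d,d)), (M b a)`_1 = @c1 _ d d M b a by move=> M; rewrite mxE.
rewrite !c1_mul !c0_mul !c0_exp !c1_exp !c0D !c1D !c0C !c1C.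
case: c => [[[i j]|[i j]]|[[x j]|[x j]]] /=;
  rewrite ?c0_0 ?c1_0 ?c0X ?c1X ?addr0 ?mulmx0 ?mul0mx ?add0r ?addr0.
- by rewrite big1 ?mulmx0 ?mul0mx ?addr0 ?mxE // => m _; rewrite mulmx0 mul0mx.
- rewrite mulmx_sumr mulmx_suml /gZ !summxE; apply: eq_bigr => m _.
  rewrite entry_tr.
  have -> : delta_mx a b *m (V *m (Z ^+ m *m delta_mx i j *m Z ^+ (k - m.+1)) *m W)
     = (delta_mx a b *m V *m Z ^+ m) *m delta_mx i j *m (Z ^+ (k - m.+1) *m W)
     by rewrite !mulmxA.
  by rewrite tr_delta3 ?mulmxA.
- rewrite big1 ?mulmx0 ?mul0mx ?addr0 ?add0r => [|m _]; last by rewrite mulmx0 mul0mx.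
  rewrite entry_tr.
  have -> : delta_mx a b *m (delta_mx x j *m Z ^+ k *m W)
     = delta_mx a b *m delta_mx x j *m (Z ^+ k *m W) by rewrite !mulmxA.
  by rewrite tr_delta3 ?mulmxA.
- rewrite big1 ?mulmx0 ?mul0mx ?addr0 ?add0r => [|m _]; last by rewrite mulmx0 mul0mx.
rewrite entry_tr.
  have -> : delta_mx a b *m (V *m Z ^+ k *m delta_mx j x)
     = (delta_mx a b *m V *m Z ^+ k) *m delta_mx j x *m 1%:M by rewrite mulmx1 !mulmxA.
  by rewrite tr_delta3 mul1mx.
Qed.

Lemma pderiv_trZ n d i X Z V W c :
  pderiv (@trZ n d i) X Z V W c = gr (gZ Z 1%:M i) 0 0 c.
Proof.
rewrite /pderiv /trZ.
have -> : forall (M : 'M[{poly R}]_n), (\tr M)`_1 = \tr (@c1 _ n n M).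
  by move=> M; rewrite /mxtrace coef_sum; apply: eq_bigr => l _; rewrite mxE.
rewrite c1_exp c0D c1D c0C c1C.
case: c => [[[x j]|[x j]]|[[x j]|[x j]]] /=; rewrite ?c0_0 ?c1_0 ?c0X ?c1X ?addr0 ?add0r ?mxE //.
all: try (by rewrite big1 ?mxtrace0 // => m _; rewrite mulmx0 mul0mx).
rewrite raddf_sum /= /gZ summxE; apply: eq_bigr => m _.
by rewrite tr_delta3 mulmx1.
Qed.
End Grad.
Arguments gr {R n d}. Arguments gZ {R n}.

Section Sums.
Variable R : fieldType.

Lemma sum_kdl (I : finType) (j : I) (F : I -> R) : \sum_k kd R k j * F k = F j.
Proof.
rewrite (bigD1 j) //= big1 => [|k kj]; first by rewrite /kd eqxx mul1r addr0.
by rewrite /kd (negbTE kj) mul0r.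
Qed.
Lemma sum_kdr (I : finType) (j : I) (F : I -> R) : \sum_k kd R j k * F k = F j.
Proof.
rewrite (bigD1 j) //= big1 => [|k kj]; first by rewrite /kd eqxx mul1r addr0.
by rewrite /kd eq_sym (negbTE kj) mul0r.
Qed.

Lemma tr3 m p r (A : 'M[R]_(m,p)) (B : 'M[R]_(p,r)) (C : 'M[R]_(r,m)) :
  \tr (A *m B *m C) = \sum_j \sum_l \sum_i A j i * B i l * C l j.
Proof.
rewrite /mxtrace; apply: eq_bigr => j _; rewrite mxE; apply: eq_bigr => l _.
by rewrite mxE mulr_suml.
Qed.

Lemma ex3a (I J K : finType) (F : I -> J -> K -> R) :
  \sum_i \sum_j \sum_k F i j k = \sum_j \sum_k \sum_i F i j k.
Proof. rewrite exchange_big; apply: eq_bigr => j _; exact: exchange_big. Qed.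
Lemma ex3b (I J K : finType) (F : I -> J -> K -> R) :
  \sum_i \sum_j \sum_k F i j k = \sum_i \sum_k \sum_j F i j k.
Proof. apply: eq_bigr => i _; exact: exchange_big. Qed.

Lemma sumB4 (I J K L : finType) (F G : I -> J -> K -> L -> R) :
  \sum_i \sum_j \sum_k \sum_l (F i j k l - G i j k l) =
  \sum_i \sum_j \sum_k \sum_l F i j k l - \sum_i \sum_j \sum_k \sum_l G i j k l.
Proof.
rewrite -sumrB; apply: eq_bigr => i _; rewrite -sumrB; apply: eq_bigr => j _.
rewrite -sumrB; apply: eq_bigr => k _; exact: sumrB.
Qed.
Lemma sumM4 (I J K L : finType) (c : R) (F : I -> J -> K -> L -> R) :
  \sum_i \sum_j \sum_k \sum_l (c * F i j k l) = c * \sum_i \sum_j \sum_k \sum_l F i j k l.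
Proof.
rewrite mulr_sumr; apply: eq_bigr => i _; rewrite mulr_sumr; apply: eq_bigr => j _.
rewrite mulr_sumr; apply: eq_bigr => k _; by rewrite mulr_sumr.
Qed.

Lemma sum2_mul (I J : finType) (f : I -> R) (g : J -> R) :
  (\sum_j f j) * (\sum_l g l) = \sum_j \sum_l f j * g l.
Proof. rewrite mulr_suml; apply: eq_bigr => j _; by rewrite mulr_sumr. Qed.
Lemma sum2_add (I J : finType) (F G : I -> J -> R) :
  \sum_j \sum_l F j l + \sum_j \sum_l G j l = \sum_j \sum_l (F j l + G j l).
Proof. rewrite -big_split; apply: eq_bigr => j _; by rewrite -big_split. Qed.
Lemma sum2_scale (I J : finType) c (F : I -> J -> R) :
  c * \sum_j \sum_l F j l = \sum_j \sum_l c * F j l.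
Proof. rewrite mulr_sumr; apply: eq_bigr => j _; by rewrite mulr_sumr. Qed.
Lemma sumD4 (I J K L : finType) (F G : I -> J -> K -> L -> R) :
  \sum_i \sum_j \sum_k \sum_l (F i j k l + G i j k l) =
  \sum_i \sum_j \sum_k \sum_l F i j k l + \sum_i \sum_j \sum_k \sum_l G i j k l.
Proof.
rewrite -big_split; apply: eq_bigr => i _; rewrite -big_split; apply: eq_bigr => j _.
rewrite -big_split; apply: eq_bigr => k _; exact: big_split.
Qed.
Lemma sum2_kd (I J : finType) (F : I -> J -> R) (e : J -> I) :
  \sum_j \sum_k kd R k (e j) * F k j = \sum_j F (e j) j.
Proof. by apply: eq_bigr => j _; rewrite sum_kdl. Qed.
End Sums.
Arguments sum_kdl {R I} j F. Arguments sum_kdr {R I} j F. Arguments sum2_kd {R I J} F e.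

Section Blocks.
Variables (R : fieldType) (n d : nat) (X Z : 'M[R]_n) (V : 'M[R]_(d,n)) (W : 'M[R]_(n,d)).
Local Notation h := (2^-1 : R).

Lemma blockZZ (A B Y : 'M[R]_n) :
  \sum_i \sum_j \sum_k \sum_l A j i * B l k * (h * (kd R k j * Y i l - kd R i l * Y k j))
  = h * (\tr (A *m Y *m B) - \tr (A *m B *m Y)).
Proof.
transitivity (h * (\sum_i \sum_j \sum_k \sum_l kd R k j * (A j i * B l k * Y i l)
                 - \sum_i \sum_j \sum_k \sum_l kd R i l * (A j i * B l k * Y k j))).
  rewrite -sumB4 -sumM4; do 4! (apply: eq_bigr => ? _); ring.
congr (_ * (_ - _)).
- transitivity (\sum_i \sum_j \sum_l A j i * B l j * Y i l).
    apply: eq_bigr => i _; apply: eq_bigr => j _.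
    rewrite -(sum_kdl j (fun k => \sum_l A j i * B l k * Y i l)).
    by apply: eq_bigr => k _; rewrite mulr_sumr.
  rewrite tr3 ex3a; do 3! (apply: eq_bigr => ? _); ring.
- transitivity (\sum_i \sum_j \sum_k A j i * B i k * Y k j).
    do 3! (apply: eq_bigr => ? _); by rewrite sum_kdr.
  rewrite tr3 ex3a; do 3! (apply: eq_bigr => ? _); ring.
Qed.

Lemma blockZV (A : 'M[R]_n) (P : 'M[R]_(n,d)) :
  \sum_i \sum_j \sum_a \sum_l A j i * P l a * brUV V Z i j a l
  = h * (\tr (A *m P *m V *m Z) - \tr (A *m Z *m P *m V)).
Proof.
transitivity (h * (\sum_i \sum_j \sum_a \sum_l kd R i l * (A j i * P l a * (V *m Z) a j)
                 - \sum_i \sum_j \sum_a \sum_l (A j i * P l a * V a j * Z i l))).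
  rewrite -sumB4 -sumM4; do 4! (apply: eq_bigr => ? _); rewrite /brUV; ring.
congr (_ * (_ - _)).
- transitivity (\sum_i \sum_j \sum_a A j i * P i a * (V *m Z) a j).
    do 3! (apply: eq_bigr => ? _); by rewrite sum_kdr.
  rewrite -mulmxA tr3 ex3a; do 3! (apply: eq_bigr => ? _); ring.
- rewrite -(mulmxA A Z P) tr3 ex3a; do 3! (apply: eq_bigr => ? _).
  rewrite mxE mulr_sumr mulr_suml; apply: eq_bigr => ? _; ring.
Qed.

Lemma blockZW (A : 'M[R]_n) (Q : 'M[R]_(d,n)) :
  \sum_i \sum_j \sum_a \sum_k A j i * Q a k * brUW W Z i j a k
  = h * (\tr (A *m Z *m W *m Q) - \tr (A *m W *m Q *m Z)).
Proof.
transitivity (h * (\sum_i \sum_j \sum_a \sum_k kd R k j * (A j i * Q a k * (Z *m W) i a)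
                 - \sum_i \sum_j \sum_a \sum_k (A j i * W i a * (Q a k * Z k j)))).
  rewrite -sumB4 -sumM4; do 4! (apply: eq_bigr => ? _); rewrite /brUW; ring.
congr (_ * (_ - _)).
- transitivity (\sum_i \sum_j \sum_a A j i * (Z *m W) i a * Q a j).
    apply: eq_bigr => i _; apply: eq_bigr => j _.
    rewrite exchange_big /= -(sum_kdl j (fun k => \sum_a A j i * (Z *m W) i a * Q a k)).
    apply: eq_bigr => k _; rewrite mulr_sumr; apply: eq_bigr => ? _; ring.
  rewrite -(mulmxA A Z W) tr3 ex3a; do 3! (apply: eq_bigr => ? _); ring.
- rewrite -(mulmxA (A *m W) Q Z) tr3 ex3a; do 3! (apply: eq_bigr => ? _).
  rewrite mxE mulr_sumr; apply: eq_bigr => ? _; ring.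
Qed.

Lemma blockVV (P P' : 'M[R]_(n,d)) :
  \sum_a \sum_j \sum_b \sum_l P j a * P' l b * (h * ord_sign R b a * (V b j * V a l + V a j * V b l))
  = h * \sum_a \sum_b ord_sign R b a * ((V *m P) b a * (V *m P') a b + (V *m P) a a * (V *m P') b b).
Proof.
rewrite ex3b mulr_sumr; apply: eq_bigr => a _; rewrite mulr_sumr; apply: eq_bigr => b _.
rewrite !mxE !sum2_mul sum2_add !sum2_scale; do 2! (apply: eq_bigr => ? _); ring.
Qed.

Lemma blockWW (Q Q' : 'M[R]_(d,n)) :
  \sum_a \sum_i \sum_b \sum_k Q a i * Q' b k * (h * ord_sign R b a * (W k b * W i a + W k a * W i b))
  = h * \sum_a \sum_b ord_sign R b a * ((Q *m W) a a * (Q' *m W) b b + (Q *m W) a b * (Q' *m W) b a).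
Proof.
rewrite ex3b mulr_sumr; apply: eq_bigr => a _; rewrite mulr_sumr; apply: eq_bigr => b _.
rewrite !mxE !sum2_mul sum2_add !sum2_scale; do 2! (apply: eq_bigr => ? _); ring.
Qed.

Lemma blockVW (P : 'M[R]_(n,d)) (Q : 'M[R]_(d,n)) :
  \sum_a \sum_j \sum_b \sum_k P j a * Q b k * brVW V W a j b k
  = \sum_a ((Q *m P) a a + h * (V *m P) a a * (Q *m W) a a + h * (Q *m P) a a * (V *m W) a a)
    + h * \sum_a \sum_b ord_sign R a b * ((Q *m P) b a * (V *m W) a b + (V *m P) a a * (Q *m W) b b).
Proof.
rewrite /brVW.
transitivity (\sum_a \sum_j \sum_b \sum_k kd R a b * (P j a * Q b k *
                 (kd R k j + h * (W k a * V a j) + h * (kd R k j * (V *m W) a a)))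
  + \sum_a \sum_j \sum_b \sum_k h * ord_sign R a b * (P j a * Q b k *
                 (kd R k j * (V *m W) a b + W k b * V a j))).
  rewrite -sumD4; do 4! (apply: eq_bigr => ? _); ring.
congr (_ + _).
- rewrite ex3b; apply: eq_bigr => a _.
  transitivity (\sum_j \sum_k P j a * Q a k *
                 (kd R k j + h * (W k a * V a j) + h * (kd R k j * (V *m W) a a))).
    rewrite -(sum_kdr a (fun b => \sum_j \sum_k P j a * Q b k *
                 (kd R k j + h * (W k a * V a j) + h * (kd R k j * (V *m W) a a)))).
    by apply: eq_bigr => b _; rewrite sum2_scale.
  transitivity (\sum_j \sum_k kd R k j * (P j a * Q a k * (1 + h * (V *m W) a a))
     + h * ((\sum_j V a j * P j a) * (\sum_k Q a k * W k a))).
    rewrite sum2_mul sum2_scale sum2_add; do 2! (apply: eq_bigr => ? _); ring.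
  rewrite (sum2_kd (fun k j => P j a * Q a k * (1 + h * (V *m W) a a)) id).
  set c := (V *m W) a a; rewrite !mxE.
  have -> : \sum_j P j a * Q a j * (1 + h * c) = (\sum_j Q a j * P j a) * (1 + h * c).
    by rewrite mulr_suml; apply: eq_bigr => ? _; ring.
  ring.
- rewrite ex3b mulr_sumr; apply: eq_bigr => a _; rewrite mulr_sumr; apply: eq_bigr => b _.
  transitivity (h * ord_sign R a b * (\sum_j \sum_k kd R k j * (P j a * Q b k * (V *m W) a b)
     + (\sum_j V a j * P j a) * (\sum_k Q b k * W k b))).
    rewrite sum2_mul sum2_add sum2_scale; do 2! (apply: eq_bigr => ? _); ring.
  rewrite (sum2_kd (fun k j => P j a * Q b k * (V *m W) a b) id).
  set c := (V *m W) a b; rewrite !mxE.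
  have -> : \sum_j P j a * Q b j * c = (\sum_j Q b j * P j a) * c.
    by rewrite mulr_suml; apply: eq_bigr => ? _; ring.
  ring.
Qed.
End Blocks.

Section Main.
Variables (R : fieldType) (n d : nat).
Local Notation I := 'I_n.
Local Notation J := 'I_d.
Local Notation crd := (Defs.coord n d).

Lemma sum_pair (K L : finType) (F : K * L -> R) : \sum_p F p = \sum_i \sum_j F (i, j).
Proof. by rewrite pair_big; apply: eq_bigr => [[]]. Qed.

Lemma sum_coord (F : crd -> R) :
  \sum_c F c = \sum_i \sum_j F (inl (inl (i, j))) + \sum_i \sum_j F (inl (inr (i, j)))
             + \sum_a \sum_j F (inr (inl (a, j))) + \sum_a \sum_k F (inr (inr (a, k))).
Proof. by rewrite /Defs.coord !big_sumType !sum_pair /= addrA. Qed.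

Lemma sum2_split4 (K L : finType) (a b c e : K -> L -> R) :
  \sum_i \sum_j (a i j + b i j + c i j + e i j) =
  \sum_i \sum_j a i j + \sum_i \sum_j b i j + \sum_i \sum_j c i j + \sum_i \sum_j e i j.
Proof. by rewrite !sum2_add. Qed.

Variables (f g : crd -> R) (b : crd -> crd -> R).
Definition blk (K1 L1 K2 L2 : finType) (e1 : K1 -> L1 -> crd) (e2 : K2 -> L2 -> crd) :=
  \sum_i \sum_j \sum_k \sum_l f (e1 i j) * g (e2 k l) * b (e1 i j) (e2 k l).

Arguments blk {K1 L1 K2 L2}.
Hypothesis Hf : forall i j, f (inl (inl (i, j))) = 0.
Hypothesis Hg : forall i j, g (inl (inl (i, j))) = 0.

Lemma inner_blk (K1 L1 : finType) (e1 : K1 -> L1 -> crd) :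
  \sum_i \sum_j \sum_c f (e1 i j) * g c * b (e1 i j) c =
  blk e1 (fun k l => inl (inr (k, l))) + blk e1 (fun k l => inr (inl (k, l)))
  + blk e1 (fun k l => inr (inr (k, l))).
Proof.
transitivity (\sum_i \sum_j (
   \sum_k \sum_l f (e1 i j) * g (inl (inl (k, l))) * b (e1 i j) (inl (inl (k, l)))
 + \sum_k \sum_l f (e1 i j) * g (inl (inr (k, l))) * b (e1 i j) (inl (inr (k, l)))
 + \sum_k \sum_l f (e1 i j) * g (inr (inl (k, l))) * b (e1 i j) (inr (inl (k, l)))
 + \sum_k \sum_l f (e1 i j) * g (inr (inr (k, l))) * b (e1 i j) (inr (inr (k, l))))).
  by apply: eq_bigr => i _; apply: eq_bigr => j _; rewrite sum_coord.
rewrite sum2_split4 /blk big1 ?add0r // => i _; rewrite big1 // => j _.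
rewrite big1 // => k _; rewrite big1 // => l _; by rewrite Hg mulr0 mul0r.
Qed.

Lemma sum_coord2 :
  \sum_c \sum_c' f c * g c' * b c c' =
    blk (fun i j => inl (inr (i, j))) (fun k l => inl (inr (k, l)))
  + blk (fun i j => inl (inr (i, j))) (fun k l => inr (inl (k, l)))
  + blk (fun i j => inl (inr (i, j))) (fun k l => inr (inr (k, l)))
  + blk (fun i j => inr (inl (i, j))) (fun k l => inl (inr (k, l)))
  + blk (fun i j => inr (inl (i, j))) (fun k l => inr (inl (k, l)))
  + blk (fun i j => inr (inl (i, j))) (fun k l => inr (inr (k, l)))
  + blk (fun i j => inr (inr (i, j))) (fun k l => inl (inr (k, l)))
  + blk (fun i j => inr (inr (i, j))) (fun k l => inr (inl (k, l)))
  + blk (fun i j => inr (inr (i, j))) (fun k l => inr (inr (k, l))).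
Proof.
rewrite sum_coord.
rewrite (@inner_blk _ _ (fun i j => inl (inr (i, j)))).
rewrite (@inner_blk _ _ (fun i j => inr (inl (i, j)))).
rewrite (@inner_blk _ _ (fun i j => inr (inr (i, j)))).
rewrite big1 ?add0r => [|i _]; last by rewrite big1 // => j _; apply: big1 => c _; rewrite Hf !mul0r.
by rewrite !addrA.
Qed.
End Main.

Section QG.
Variables (R : fieldType) (n d : nat) (X Z : 'M[R]_n) (V : 'M[R]_(d,n)) (W : 'M[R]_(n,d)).
Local Notation h := (2^-1 : R).

Lemma ex22 (I J K L : finType) (F : I -> J -> K -> L -> R) :
  \sum_i \sum_j \sum_k \sum_l F i j k l = \sum_k \sum_l \sum_i \sum_j F i j k l.
Proof.
transitivity (\sum_i \sum_k \sum_l \sum_j F i j k l).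
  apply: eq_bigr => i _; rewrite exchange_big; apply: eq_bigr => k _; exact: exchange_big.
rewrite exchange_big; apply: eq_bigr => k _; exact: exchange_big.
Qed.

Lemma swapN (I J K L : finType) (u : I -> J -> R) (v : K -> L -> R) (F : K -> L -> I -> J -> R) :
  \sum_i \sum_j \sum_k \sum_l u i j * v k l * - F k l i j
  = - \sum_k \sum_l \sum_i \sum_j v k l * u i j * F k l i j.
Proof. rewrite ex22 -[RHS]mulN1r -sumM4; do 4! (apply: eq_bigr => ? _); ring. Qed.

Lemma qbr_gr (F G : pfun n d) (A B : 'M[R]_n) (P P' : 'M[R]_(n,d)) (Q Q' : 'M[R]_(d,n)) :
  (forall c, pderiv F X Z V W c = gr A P Q c) ->
  (forall c, pderiv G X Z V W c = gr B P' Q' c) ->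
  qbr X Z V W F G =
    h * (\tr (A *m (Z *m Z) *m B) - \tr (A *m B *m (Z *m Z)))
  + h * (\tr (A *m P' *m V *m Z) - \tr (A *m Z *m P' *m V))
  + h * (\tr (A *m Z *m W *m Q') - \tr (A *m W *m Q' *m Z))
  - h * (\tr (B *m P *m V *m Z) - \tr (B *m Z *m P *m V))
  + h * \sum_a \sum_b ord_sign R b a * ((V *m P) b a * (V *m P') a b + (V *m P) a a * (V *m P') b b)
  + (\sum_a ((Q' *m P) a a + h * (V *m P) a a * (Q' *m W) a a + h * (Q' *m P) a a * (V *m W) a a)
    + h * \sum_a \sum_b ord_sign R a b * ((Q' *m P) b a * (V *m W) a b + (V *m P) a a * (Q' *m W) b b))
  - h * (\tr (B *m Z *m W *m Q) - \tr (B *m W *m Q *m Z))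
  - (\sum_a ((Q *m P') a a + h * (V *m P') a a * (Q *m W) a a + h * (Q *m P') a a * (V *m W) a a)
    + h * \sum_a \sum_b ord_sign R a b * ((Q *m P') b a * (V *m W) a b + (V *m P') a a * (Q *m W) b b))
  + h * \sum_a \sum_b ord_sign R b a * ((Q *m W) a a * (Q' *m W) b b + (Q *m W) a b * (Q' *m W) b a).
Proof.
move=> HF HG; rewrite /qbr.
transitivity (\sum_c \sum_c' gr A P Q c * gr B P' Q' c' * brc X Z V W c c').
  by apply: eq_bigr => c _; apply: eq_bigr => c' _; rewrite HF HG.
rewrite (@sum_coord2 R n d (gr A P Q) (gr B P' Q') (brc X Z V W)) // /blk /=.
rewrite (@swapN _ _ _ _ (fun i j => P j i) (fun k l => B l k) (fun k l i j => brUV V Z k l i j)).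
rewrite (@swapN _ _ _ _ (fun i j => Q i j) (fun k l => B l k) (fun k l i j => brUW W Z k l i j)).
rewrite (@swapN _ _ _ _ (fun i j => Q i j) (fun k l => P' l k) (fun k l i j => brVW V W k l i j)).
by rewrite blockZZ !blockZV !blockZW blockVV !blockVW blockWW !addrA.
Qed.
End QG.
Arguments qbr_gr {R n d X Z V W F G A B P P' Q Q'}.

Section QG2.
Variables (R : fieldType) (n d : nat) (X Z : 'M[R]_n) (V : 'M[R]_(d,n)) (W : 'M[R]_(n,d)).
Local Notation h := (2^-1 : R).

Lemma trC m p (M : 'M[R]_(m,p)) (N : 'M[R]_(p,m)) : \tr (M *m N) = \tr (N *m M).
Proof. exact: mxtrace_mulC. Qed.

Lemma qbr_gr2 (F G : pfun n d) (A B : 'M[R]_n) (P P' : 'M[R]_(n,d)) (Q Q' : 'M[R]_(d,n)) :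
  (forall c, pderiv F X Z V W c = gr A P Q c) ->
  (forall c, pderiv G X Z V W c = gr B P' Q' c) ->
  let CA := Z *m A - A *m Z in let CB := Z *m B - B *m Z in
  qbr X Z V W F G =
    h * \tr ((Z *m CB + CB *m Z) *m A)
  + h * (\tr (CA *m (P' *m V - W *m Q')) - \tr (CB *m (P *m V - W *m Q)))
  + (h * \sum_a \sum_b ord_sign R b a * ((V *m P) b a * (V *m P') a b + (V *m P) a a * (V *m P') b b)
  + (\sum_a ((Q' *m P) a a + h * (V *m P) a a * (Q' *m W) a a + h * (Q' *m P) a a * (V *m W) a a)
    + h * \sum_a \sum_b ord_sign R a b * ((Q' *m P) b a * (V *m W) a b + (V *m P) a a * (Q' *m W) b b))
  - (\sum_a ((Q *m P') a a + h * (V *m P') a a * (Q *m W) a a + h * (Q *m P') a a * (V *m W) a a)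
    + h * \sum_a \sum_b ord_sign R a b * ((Q *m P') b a * (V *m W) a b + (V *m P') a a * (Q *m W) b b))
  + h * \sum_a \sum_b ord_sign R b a * ((Q *m W) a a * (Q' *m W) b b + (Q *m W) a b * (Q' *m W) b a)).
Proof.
move=> HF HG CA CB; rewrite (qbr_gr HF HG).
have e1 : \tr (A *m (Z *m Z) *m B) - \tr (A *m B *m (Z *m Z)) = \tr ((Z *m CB + CB *m Z) *m A).
  have -> : Z *m CB + CB *m Z = Z *m Z *m B - B *m Z *m Z.
    by rewrite /CB mulmxBr mulmxBl !mulmxA addrA subrK.
  by rewrite mulmxBl raddfB /=; congr (_ - _); rewrite [RHS]trC !mulmxA.
have e2 : \tr (A *m P' *m V *m Z) - \tr (A *m Z *m P' *m V)
        + (\tr (A *m Z *m W *m Q') - \tr (A *m W *m Q' *m Z))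
        = \tr (CA *m (P' *m V - W *m Q')).
  rewrite /CA mulmxBr !mulmxBl !raddfB /= !mulmxA.
  rewrite [\tr (A *m P' *m V *m Z)]trC [\tr (A *m W *m Q' *m Z)]trC !mulmxA; ring.
have e3 : \tr (B *m P *m V *m Z) - \tr (B *m Z *m P *m V)
        + (\tr (B *m Z *m W *m Q) - \tr (B *m W *m Q *m Z))
        = \tr (CB *m (P *m V - W *m Q)).
  rewrite /CB mulmxBr !mulmxBl !raddfB /= !mulmxA.
  rewrite [\tr (B *m P *m V *m Z)]trC [\tr (B *m W *m Q *m Z)]trC !mulmxA; ring.
rewrite -e1 -e2 -e3; ring.
Qed.
End QG2.
Arguments qbr_gr2 {R n d X Z V W F G A B P P' Q Q'}.

Section Range.
Variable R : fieldType.
Variables (tg ta : nat -> R) (k l : nat).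
Let G j := tg (k + l - j)%N * ta j.
Let S a b := \sum_(a <= j < b) G j.

Lemma sh c : \sum_(m < k) G (m + c)%N = S c (k + c).
Proof. by rewrite /S -[X in \sum_(X <= _ < _) _]add0n big_addn addnK big_mkord. Qed.

Lemma shift2 a b c : \sum_(a <= i < b) G (i + c)%N = S (a + c) (b + c).
Proof. by rewrite /S big_addn addnK. Qed.

Lemma range_id : (0 < k)%N -> (0 < l)%N ->
 \sum_(m < k) (G (m + l + 1)%N - G (m + 1)%N + G (m + l)%N - G m) =
   (\sum_(1 <= tau < k.+1) tg (k - tau)%N * ta (l + tau)%N - \sum_(1 <= tau < k) tg (k + l - tau)%N * ta tau)
 - (\sum_(1 <= s < l.+1) tg (k + s)%N * ta (l - s)%N - \sum_(1 <= s < l) tg s * ta (k + l - s)%N).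
Proof.
move=> k0 l0.
rewrite sumrB big_split /= sumrB.
have -> : \sum_(m < k) G (m + l + 1)%N = S l.+1 (k + l).+1.
  rewrite (eq_bigr (fun m : 'I_k => G (m + l.+1)%N)) => [|m _]; last by rewrite addn1 addnS.
  by rewrite sh addnS.
have -> : \sum_(m < k) G (m + 1)%N = S 1 k.+1 by rewrite sh addn1.
have -> : \sum_(m < k) G (m + l)%N = S l (k + l) by rewrite sh.
have -> : \sum_(m < k) G m = S 0 k.
  by rewrite /S big_mkord.
have -> : \sum_(1 <= tau < k.+1) tg (k - tau)%N * ta (l + tau)%N = S l.+1 (k + l).+1.
  rewrite (eq_big_nat _ _ (F2 := fun tau => G (tau + l)%N)) => [|i /andP[i1 ik]].
    by rewrite shift2 add1n addSn.
  rewrite /G; congr (tg _ * ta _); lia.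
have -> : \sum_(1 <= tau < k) tg (k + l - tau)%N * ta tau = S 1 k by rewrite /S /G.
have -> : \sum_(1 <= s < l.+1) tg (k + s)%N * ta (l - s)%N = S 0 l.
  rewrite (eq_big_nat _ _ (F2 := fun s => G (l - s)%N)) => [|i /andP[i1 il]]; last first.
    rewrite /G; congr (tg _ * ta _); lia.
  rewrite big_add1 /= /S big_nat_rev /=; apply: eq_big_nat => i /andP[_ il].
  by congr G; lia.
have -> : \sum_(1 <= s < l) tg s * ta (k + l - s)%N = S k.+1 (k + l).
  rewrite (eq_big_nat _ _ (F2 := fun s => G (k + l - s)%N)) => [|i /andP[i1 il]]; last first.
    rewrite /G; congr (tg _ * ta _); lia.
  rewrite big_nat_rev /=.
  rewrite (eq_big_nat _ _ (F2 := fun s => G (s + k)%N)) => [|i /andP[i1 il]]; last first.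
    by congr G; lia.
  by rewrite shift2 add1n addnC.
have d1 : S 1 k.+1 = S 1 k + G k by rewrite /S big_nat_recr.
have d2 : S 0 (k + l) = S 0 l + S l (k + l) by rewrite /S (big_cat_nat (n:=l)) ?leq_addl.
have d3 : S 0 (k + l) = S 0 k + S k (k + l) by rewrite /S (big_cat_nat (n:=k)) ?leq_addr.
have d4 : S k (k + l) = G k + S k.+1 (k + l) by rewrite /S big_ltn // -{1}[k]addn0 ltn_add2l.
have e : S l (k + l) = S 0 k + G k + S k.+1 (k + l) - S 0 l.
  by rewrite -(addrA (S 0 k)) -d4 -d3 d2 addrAC subrr add0r.
rewrite e d1; ring.
Qed.
End Range.

Section Fin.
Variables (R : fieldType) (n d : nat).
Local Notation h := (2^-1 : R).

Lemma gZS (Z N : 'M[R]_n) k : gZ Z N k.+1 = Z *m gZ Z N k + N *m Z ^+ k.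
Proof.
rewrite /gZ big_ord_recr /= subnn expr0 mul1mx; congr (_ + _).
rewrite mulmx_sumr; apply: eq_bigr => m _ /=.
have -> : (k.+1 - m.+1 = (k - m.+1).+1)%N by have := ltn_ord m; lia.
by rewrite exprS -mulmxE !mulmxA.
Qed.

Lemma gZ_comm (Z N : 'M[R]_n) k : Z *m gZ Z N k - gZ Z N k *m Z = Z ^+ k *m N - N *m Z ^+ k.
Proof.
elim: k => [|k IH]; first by rewrite /gZ big_ord0 mulmx0 mul0mx subrr expr0 mul1mx mulmx1 subrr.
rewrite gZS mulmxDr mulmxDl.
have -> : Z *m (Z *m gZ Z N k) + Z *m (N *m Z ^+ k) - (Z *m gZ Z N k *m Z + N *m Z ^+ k *m Z)
   = Z *m (Z *m gZ Z N k - gZ Z N k *m Z) + (Z *m (N *m Z ^+ k) - N *m Z ^+ k *m Z).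
  by rewrite mulmxBr !mulmxA opprD addrACA.
rewrite IH mulmxBr !mulmxA addrA subrK.
by rewrite {1}exprS exprSr -!mulmxE !mulmxA.
Qed.

Lemma kdC (T : eqType) (x y : T) : kd R x y = kd R y x.
Proof. by rewrite /kd eq_sym. Qed.

Lemma mxdr p q r (M : 'M[R]_(p,q)) (i : 'I_q) (j : 'I_r) x y :
  (M *m delta_mx i j) x y = M x i * kd R j y.
Proof.
rewrite mxE (bigD1 i) //= big1 ?addr0 => [|z zi]; first by rewrite mxE eqxx /kd /= eq_sym.
by rewrite [delta_mx _ _ _ _]mxE (negbTE zi) mulr0.
Qed.

Lemma mxdl p q r (M : 'M[R]_(q,r)) (i : 'I_p) (j : 'I_q) x y :
  (delta_mx i j *m M) x y = kd R x i * M j y.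
Proof.
rewrite mxE (bigD1 j) //= big1 ?addr0 => [|z zj]; first by rewrite mxE eqxx andbT /kd /=.
by rewrite [delta_mx _ _ _ _]mxE (negbTE zj) andbF mul0r.
Qed.

Lemma mxdd p q r s (M : 'M[R]_(q,r)) (i : 'I_p) (j : 'I_q) (u : 'I_r) (v : 'I_s) x y :
  (delta_mx i j *m M *m delta_mx u v) x y = kd R x i * M j u * kd R v y.
Proof. by rewrite mxdr mxdl. Qed.

Lemma dsum2 (e b : 'I_d) (F : 'I_d -> 'I_d -> R) :
  \sum_x \sum_y kd R e x * kd R b y * F x y = F e b.
Proof.
rewrite -(sum_kdr e (fun x => F x b)); apply: eq_bigr => x _.
rewrite -(sum_kdr b (fun y => kd R e x * F x y)); apply: eq_bigr => y _; ring.
Qed.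

Variables (g e a b : 'I_d).
Local Notation dge := (delta_mx g e : 'M[R]_d).
Local Notation dab := (delta_mx a b : 'M[R]_d).

Lemma valVV (Ta Tb : 'M[R]_d) :
  \sum_x \sum_y ord_sign R y x * ((Ta *m dge) y x * (Tb *m dab) x y + (Ta *m dge) x x * (Tb *m dab) y y)
  = ord_sign R b e * (Ta b g * Tb e a + Ta e g * Tb b a).
Proof.
rewrite -(dsum2 e b (fun x y => ord_sign R y x * (Ta y g * Tb x a + Ta x g * Tb y a))).
do 2! (apply: eq_bigr => ? _); rewrite !mxdr; ring.
Qed.

Lemma valWW (Ta Tb : 'M[R]_d) :
  \sum_x \sum_y ord_sign R y x * ((dge *m Ta) x x * (dab *m Tb) y y + (dge *m Ta) x y * (dab *m Tb) y x)
  = ord_sign R a g * (Ta e g * Tb b a + Ta e a * Tb b g).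
Proof.
rewrite -(dsum2 g a (fun x y => ord_sign R y x * (Ta e x * Tb b y + Ta e y * Tb b x))).
do 2! (apply: eq_bigr => ? _); rewrite !mxdl (kdC _ g) (kdC _ a); ring.
Qed.

Lemma valVW1 (Ta Tb Tc T0 : 'M[R]_d) :
  \sum_x ((dab *m Tc *m dge) x x + h * (Ta *m dge) x x * (dab *m Tb) x x
          + h * (dab *m Tc *m dge) x x * T0 x x)
  = kd R a e * (Tc b g + h * Ta e g * Tb b a + h * Tc b g * T0 e a).
Proof.
transitivity (\sum_x kd R e x * (kd R x a * (Tc b g + h * Ta x g * Tb b x + h * Tc b g * T0 x x))).
  apply: eq_bigr => x _; rewrite !mxdd !mxdr !mxdl; ring.
rewrite sum_kdr; case: (eqVneq a e) => [->|ne] //.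
by rewrite /kd (negbTE ne) eq_sym (negbTE ne) !mul0r.
Qed.

Lemma valVW2 (Ta Tb Tc T0 : 'M[R]_d) :
  \sum_x \sum_y ord_sign R x y * ((dab *m Tc *m dge) y x * T0 x y + (Ta *m dge) x x * (dab *m Tb) y y)
  = ord_sign R e a * (Tc b g * T0 e a + Ta e g * Tb b a).
Proof.
rewrite -(dsum2 e a (fun x y => ord_sign R x y * (Tc b g * T0 x y + Ta x g * Tb b y))).
do 2! (apply: eq_bigr => ? _); rewrite !mxdd !mxdr !mxdl (kdC _ a); ring.
Qed.
End Fin.

Section Fin3.
Variables (R : fieldType) (n d : nat) (X Z : 'M[R]_n) (V : 'M[R]_(d,n)) (W : 'M[R]_(n,d)).
Local Notation h := (2^-1 : R).
Local Notation tt p x y := (@tfun n d p x y R X Z V W).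

Lemma tr_dd (i j u v : 'I_d) (Y Y' : 'M[R]_d) :
  \tr (delta_mx i j *m Y *m delta_mx u v *m Y') = Y j u * Y' v i.
Proof.
rewrite /mxtrace (eq_bigr (fun x => kd R i x * (Y j u * Y' v x))) => [|x _].
  by rewrite sum_kdr.
rewrite mxE (eq_bigr (fun z => kd R v z * (kd R x i * Y j u * Y' z x))) => [|z _].
  by rewrite sum_kdr kdC; ring.
by rewrite mxdd; ring.
Qed.

Variables (g e a b : 'I_d).
Local Notation N := (W *m delta_mx g e *m V).
Local Notation N' := (W *m delta_mx a b *m V).

Lemma trNZ2 s u r v :
  \tr (Z ^+ s *m N' *m Z ^+ u *m (Z ^+ r *m N *m Z ^+ v)) = tt (u + r) g b * tt (v + s) a e.
Proof.
have e1 : Z ^+ s *m N' *m Z ^+ u *m (Z ^+ r *m N *m Z ^+ v)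
  = Z ^+ s *m W *m (delta_mx a b *m V *m Z ^+ u *m Z ^+ r *m W *m delta_mx g e *m V *m Z ^+ v)
  by rewrite !mulmxA.
rewrite e1 trC.
have e2 : delta_mx a b *m V *m Z ^+ u *m Z ^+ r *m W *m delta_mx g e *m V *m Z ^+ v *m (Z ^+ s *m W)
  = delta_mx a b *m (V *m Z ^+ (u + r) *m W) *m delta_mx g e *m (V *m Z ^+ (v + s) *m W)
  by rewrite !exprD -!mulmxE !mulmxA.
by rewrite e2 tr_dd.
Qed.

Variables (k l : nat).
Let G j := tt (k + l - j)%N g b * tt j a e.

Lemma ZZterm (m : nat) : (m < k)%N ->
  \tr ((Z *m (Z ^+ l *m N' - N' *m Z ^+ l) + (Z ^+ l *m N' - N' *m Z ^+ l) *m Z)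
        *m (Z ^+ (k - m.+1) *m N *m Z ^+ m))
  = G (m + l + 1)%N - G (m + 1)%N + G (m + l)%N - G m.
Proof.
move=> mk.
have ec : Z *m (Z ^+ l *m N' - N' *m Z ^+ l) + (Z ^+ l *m N' - N' *m Z ^+ l) *m Z
  = Z ^+ l.+1 *m N' *m Z ^+ 0 - Z ^+ 1 *m N' *m Z ^+ l
    + (Z ^+ l *m N' *m Z ^+ 1 - Z ^+ 0 *m N' *m Z ^+ l.+1).
  by rewrite expr0 expr1 mulmx1 mul1mx {1}exprS exprSr -!mulmxE mulmxBr mulmxBl !mulmxA.
rewrite ec mulmxDl !mulmxBl raddfD !raddfB /= !trNZ2 !addrA /G.
congr (_ - _ + _ - _); congr (tt _ _ _ * tt _ _ _); lia.
Qed.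
End Fin3.

Lemma ZZ0 (R : fieldType) n (Z A B : 'M[R]_n) : A *m Z = Z *m A ->
  \tr ((Z *m (Z *m B - B *m Z) + (Z *m B - B *m Z) *m Z) *m A) = 0.
Proof.
move=> AZ.
have -> : Z *m (Z *m B - B *m Z) + (Z *m B - B *m Z) *m Z = Z *m Z *m B - B *m Z *m Z.
  by rewrite mulmxBr mulmxBl !mulmxA addrA subrK.
have ZZA : Z *m Z *m A = A *m (Z *m Z).
  by rewrite -mulmxA -AZ mulmxA -AZ -mulmxA.
rewrite mulmxBl raddfB /=.
have -> : B *m Z *m Z *m A = B *m A *m (Z *m Z) by rewrite -(mulmxA B Z Z) -(mulmxA B (Z *m Z) A) ZZA !mulmxA.
by rewrite [\tr (B *m A *m _)]trC !mulmxA subrr.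
Qed.

Lemma blocks0 (R : fieldType) n d (V : 'M[R]_(d,n)) (W : 'M[R]_(n,d)) (P' : 'M[R]_(n,d)) (Q' : 'M[R]_(d,n)) :
  let P := 0 : 'M[R]_(n,d) in let Q := 0 : 'M[R]_(d,n) in
  (2^-1 * \sum_a \sum_b ord_sign R b a * ((V *m P) b a * (V *m P') a b + (V *m P) a a * (V *m P') b b)
  + (\sum_a ((Q' *m P) a a + 2^-1 * (V *m P) a a * (Q' *m W) a a + 2^-1 * (Q' *m P) a a * (V *m W) a a)
    + 2^-1 * \sum_a \sum_b ord_sign R a b * ((Q' *m P) b a * (V *m W) a b + (V *m P) a a * (Q' *m W) b b))
  - (\sum_a ((Q *m P') a a + 2^-1 * (V *m P') a a * (Q *m W) a a + 2^-1 * (Q *m P') a a * (V *m W) a a)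
    + 2^-1 * \sum_a \sum_b ord_sign R a b * ((Q *m P') b a * (V *m W) a b + (V *m P') a a * (Q *m W) b b))
  + 2^-1 * \sum_a \sum_b ord_sign R b a * ((Q *m W) a a * (Q' *m W) b b + (Q *m W) a b * (Q' *m W) b a)) = 0.
Proof.
move=> P Q; rewrite /P /Q !mulmx0 !mul0mx.
rewrite big1 => [|x _]; last by rewrite big1 // => y _; rewrite !mxE; ring.
rewrite big1 => [|x _]; last by rewrite !mxE; ring.
rewrite big1 => [|x _]; last by rewrite big1 // => y _; rewrite !mxE; ring.
rewrite big1 => [|x _]; last by rewrite !mxE; ring.
rewrite big1 => [|x _]; last by rewrite big1 // => y _; rewrite !mxE; ring.
rewrite big1 => [|x _]; last by rewrite big1 // => y _; rewrite !mxE; ring.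
ring.
Qed.

Lemma ord_signC (R : fieldType) d (x y : 'I_d) : ord_sign R x y = - ord_sign R y x.
Proof.
rewrite /ord_sign (eq_sym y x); have [xy|ne] := eqVneq x y; first by rewrite oppr0.
case: (ltngtP x y) => h.
- by rewrite ?opprK.
- by rewrite ?opprK.
- by case/eqP: ne; apply: val_inj.
Qed.

Theorem part1 (R : fieldType) (n d : nat) X Z V W (i k : nat) (a b : 'I_d) :
  qbr X Z V W (@trZ n d i) (@tfun n d k b a) = 0 :> R.
Proof.
have E := qbr_gr2 (@pderiv_trZ R n d i X Z V W) (@pderiv_tfun R n d k b a X Z V W).
cbv zeta in E; rewrite E blocks0.
have AZ : gZ Z 1%:M i *m Z = Z *m gZ Z 1%:M i.
  by apply/eqP; rewrite eq_sym -subr_eq0 gZ_comm mulmx1 mul1mx subrr.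
rewrite ZZ0 // !gZ_comm mulmx1 mul1mx subrr !mul0mx !mulmx0 subrr mulmx0 mxtrace0.
by rewrite subrr !mulr0 !addr0.
Qed.

Theorem part2 (R : fieldType) (n d : nat) X Z V W (k l : nat) (a b g e : 'I_d) :
  let t k (a b : 'I_d) := @tfun n d k a b R X Z V W in
  let o := @ord_sign R d in
  let dl (x y : 'I_d) := @kd R _ x y in
     qbr X Z V W (@tfun n d k g e) (@tfun n d l a b) =
       2^-1 * (o g b + o e a - o e b - o g a) * t k g e * t l a b
     + 2^-1 * o g b * t (k + l)%N a e * t 0%N g b
     + 2^-1 * o e a * t 0%N a e * t (k + l)%N g b
     - 2^-1 * o e b * t l a e * t k g b
     - 2^-1 * o g a * t k a e * t l g b
     - dl g b * (t (k + l)%N a e + 2^-1 * t (k + l)%N a e * t 0%N g b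
                 + 2^-1 * t k g e * t l a b)
     + dl a e * (t (k + l)%N g b + 2^-1 * t 0%N a e * t (k + l)%N g b
                 + 2^-1 * t k g e * t l a b)
     + (if (0 < k)%N && (0 < l)%N then
          2^-1 * (\sum_(1 <= tau < k.+1) t (k - tau)%N g b * t (l + tau)%N a e
                  - \sum_(1 <= tau < k) t (k + l - tau)%N g b * t tau a e)
        - 2^-1 * (\sum_(1 <= s < l.+1) t (k + s)%N g b * t (l - s)%N a e
                  - \sum_(1 <= s < l) t s g b * t (k + l - s)%N a e)
        else 0).
Proof.
move=> t o dl.
have E := qbr_gr2 (@pderiv_tfun R n d k g e X Z V W) (@pderiv_tfun R n d l a b X Z V W).
cbv zeta in E; rewrite E !gZ_comm.
have e1 : Z ^+ l *m W *m delta_mx a b *m V - W *m (delta_mx a b *m V *m Z ^+ l)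
   = Z ^+ l *m (W *m delta_mx a b *m V) - W *m delta_mx a b *m V *m Z ^+ l by rewrite !mulmxA.
have e2 : Z ^+ k *m W *m delta_mx g e *m V - W *m (delta_mx g e *m V *m Z ^+ k)
   = Z ^+ k *m (W *m delta_mx g e *m V) - W *m delta_mx g e *m V *m Z ^+ k by rewrite !mulmxA.
rewrite e1 e2 [\tr ((Z ^+ l *m _ - _) *m _)]trC subrr mulr0 addr0.
have eVP : V *m (Z ^+ k *m W *m delta_mx g e) = V *m Z ^+ k *m W *m delta_mx g e by rewrite !mulmxA.
have eVP' : V *m (Z ^+ l *m W *m delta_mx a b) = V *m Z ^+ l *m W *m delta_mx a b by rewrite !mulmxA.
have eQ'P : delta_mx a b *m V *m Z ^+ l *m (Z ^+ k *m W *m delta_mx g e)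
   = delta_mx a b *m (V *m Z ^+ (k + l) *m W) *m delta_mx g e.
  by rewrite addnC exprD -mulmxE !mulmxA.
have eQP' : delta_mx g e *m V *m Z ^+ k *m (Z ^+ l *m W *m delta_mx a b)
   = delta_mx g e *m (V *m Z ^+ (k + l) *m W) *m delta_mx a b.
  by rewrite exprD -mulmxE !mulmxA.
have eQW : delta_mx g e *m V *m Z ^+ k *m W = delta_mx g e *m (V *m Z ^+ k *m W) by rewrite !mulmxA.
have eQ'W : delta_mx a b *m V *m Z ^+ l *m W = delta_mx a b *m (V *m Z ^+ l *m W) by rewrite !mulmxA.
rewrite eVP eVP' eQ'P eQP' eQW eQ'W valVV valWW !valVW1 !valVW2.
have ZZ : 2^-1 * \tr ((Z *m (Z ^+ l *m (W *m delta_mx a b *m V) - W *m delta_mx a b *m V *m Z ^+ l)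
     + (Z ^+ l *m (W *m delta_mx a b *m V) - W *m delta_mx a b *m V *m Z ^+ l) *m Z)
     *m gZ Z (W *m delta_mx g e *m V) k)
   = (if (0 < k)%N && (0 < l)%N then
          2^-1 * (\sum_(1 <= tau < k.+1) t (k - tau)%N g b * t (l + tau)%N a e
                  - \sum_(1 <= tau < k) t (k + l - tau)%N g b * t tau a e)
        - 2^-1 * (\sum_(1 <= s < l.+1) t (k + s)%N g b * t (l - s)%N a e
                  - \sum_(1 <= s < l) t s g b * t (k + l - s)%N a e)
        else 0).
  rewrite /t /gZ mulmx_sumr raddf_sum /=.
  under eq_bigr => m _ do rewrite (@ZZterm R n d X) //.
  case: (posnP k) => [k0|k0]; first by subst k; rewrite big_ord0 mulr0.
  case: (posnP l) => [l0|l0].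
    subst l; rewrite andbF big1 ?mulr0 // => m _ /=; rewrite !addn0; ring.
  rewrite /= (@range_id R (fun p => @tfun n d p g b R X Z V W) (fun p => @tfun n d p a e R X Z V W) k l k0 l0).
  ring.
rewrite ZZ /t /o /dl /tfun expr0 mulmx1 (ord_signC _ _ b e) (ord_signC _ _ a g) (ord_signC _ _ b g).
ring.
Qed.
Theorem mainTheorem8 (R : numClosedFieldType) (n d : nat) (q : R) :
  (1 <= n)%N -> (1 <= d)%N -> q != 0 ->
  (forall m : nat, (0 < m)%N -> q ^+ m != 1) ->
  forall (X Z : 'M[R]_n) (V : 'M[R]_(d, n)) (W : 'M[R]_(n, d)),
  inMx q X Z V W ->
  let t k (a b : 'I_d) := @tfun n d k a b R X Z V W in
  let o := @ord_sign R d in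
  let dl (x y : 'I_d) := @kd R _ x y in
  (forall (i k : nat) (a b : 'I_d), (1 <= i)%N ->
     qbr X Z V W (@trZ n d i) (@tfun n d k b a) = 0) /\
  (forall (k l : nat) (a b g e : 'I_d),
     qbr X Z V W (@tfun n d k g e) (@tfun n d l a b) =
       2^-1 * (o g b + o e a - o e b - o g a) * t k g e * t l a b
     + 2^-1 * o g b * t (k + l)%N a e * t 0%N g b
     + 2^-1 * o e a * t 0%N a e * t (k + l)%N g b
     - 2^-1 * o e b * t l a e * t k g b
     - 2^-1 * o g a * t k a e * t l g b
     - dl g b * (t (k + l)%N a e + 2^-1 * t (k + l)%N a e * t 0%N g b
                 + 2^-1 * t k g e * t l a b)
     + dl a e * (t (k + l)%N g b + 2^-1 * t 0%N a e * t (k + l)%N g b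
                 + 2^-1 * t k g e * t l a b)
     + (if (0 < k)%N && (0 < l)%N then
          2^-1 * (\sum_(1 <= tau < k.+1) t (k - tau)%N g b * t (l + tau)%N a e
                  - \sum_(1 <= tau < k) t (k + l - tau)%N g b * t tau a e)
        - 2^-1 * (\sum_(1 <= s < l.+1) t (k + s)%N g b * t (l - s)%N a e
                  - \sum_(1 <= s < l) t s g b * t (k + l - s)%N a e)
        else 0)).
Proof.
move=> _ _ _ _ X Z V W _ t o dl; split.
- by move=> i k a b _; exact: part1.
- by move=> k l a b g e; exact: part2.
Qed.
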